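(* Let $\mathcal{X}=\mathcal{X}^{(1)}\times\cdots\times\mathcal{X}^{(d)}$ with each $\mathcal{X}^{(i)}$ finite, let $\pi\in\mathcal{P}(\mathcal{X})$ be positive, $P\in\mathcal{L}(\mathcal{X})$, fix $i\in\{1,\dots,d\}$ and $L_j\in\mathcal{L}(\mathcal{X}^{(j)})$ for $j\neq i$. Consider minimizers $L_*^{(i)}\in\arg\min_{L\in\mathcal{L}(\mathcal{X}^{(i)})}D_f^\pi\big(P\,\|\,(\otimes_{j<i}L_j)\otimes L\otimes(\otimes_{j>i}L_j)\big)$. Writing $x=(x^1,\dots,x^d)$, $x^{(-i)}=(x^j)_{j\ne i}$, $\mathbf{Z}(x^{(-i)},y^{(-i)}):=\prod_{j\neq i}L_j(x^j,y^j)$ and $Z(x^i,y^i):=\sum_{x^{(-i)},y^{(-i)}}\pi(x)\mathbf{Z}(x^{(-i)},y^{(-i)})$: 1. If $f(t)=-\ln t$ (reverse KL), the unique $L^{(i)}_*$ is given by $L_*^{(i)}(x^i,y^i)\propto\prod_{x^{(-i)},y^{(-i)}}P(x,y)^{\pi(x)\mathbf{Z}(x^{(-i)},y^{(-i)})/Z(x^i,y^i)}$ (normalized over $y^i$). 2. If $f(t)=\frac{1}{\alpha-1}(t^\alpha-1)$ with $\alpha\in(0,1)\cup(1,\infty)$, the unique $L^{(i)}_*$ is given by $L_*^{(i)}(x^i,y^i)\propto\Big(\sum_{x^{(-i)},y^{(-i)}}\pi(x)\big(\prod_{j\ne i}L_j(x^j,y^j)\big)^{1-\alpha}P(x,y)^\alpha\Big)^{1/\alpha}$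 (normalized over $y^i$). 3. If $f(t)=t\ln t$ (KL), the unique $L^{(i)}_*$ is $L_*^{(i)}=P^{(i)}_\pi$, which does not depend on $L_j$, $j\ne i$.
   Context: $\mathcal{P}(\Omega),\mathcal{L}(\Omega)$: probability masses and transition matrices on finite $\Omega$. $D_f^{\pi}(M\|L):=\sum_{x}\pi(x)\sum_y L(x,y)f\big(M(x,y)/L(x,y)\big)$ with standard conventions $0f(0/0)=0$, $0f(a/0)=a\lim_{t\to0^+}tf(1/t)$. $(\otimes_jL_j)(x,y)=\prod_jL_j(x^j,y^j)$. $P^{(i)}_\pi(x^i,y^i):=\frac{\sum_{x^{(-i)},y^{(-i)}}\pi(x)P(x,y)}{\pi^{(i)}(x^i)}$, with $\pi^{(i)}$ the $i$th marginal of $\pi$. *)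

(* Defs.v *)
From HB Require Import structures.
From mathcomp Require Import all_boot all_order all_algebra.
From mathcomp Require Import all_classical all_reals all_analysis.
Set Implicit Arguments. Unset Printing Implicit Defensive.
Import Order.TTheory GRing.Theory Num.Theory.
Import numFieldNormedType.Exports.
Local Open Scope classical_set_scope.
Local Open Scope ring_scope.

Section Defs.
Context {R : realType}.

Definition is_pmf {S : finType} (pi : S -> R) : Prop :=
  (forall x, 0 <= pi x) /\ \sum_x pi x = 1.

Definition is_trans {S : finType} (L : S -> S -> R) : Prop :=
  (forall x y, 0 <= L x y) /\ (forall x, \sum_y L x y = 1).

Definition f_at0 (f : R -> R) : \bar R := lim ((fun t => (f t)%:E) @ 0^'+).
Definition f_inf (f : R -> R) : \bar R := lim ((fun t => (t * f t^-1)%:E) @ 0^'+).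

(* the summand  L f(M/L)  with conventions 0 f(0/0) = 0,
   0 f(a/0) = a lim_{t->0+} t f(1/t), and f(0) := f(0+) *)
Definition fterm (f : R -> R) (m l : R) : \bar R :=
  if l == 0 then (if m == 0 then 0%E else (m%:E * f_inf f)%E)
  else if m == 0 then (l%:E * f_at0 f)%E
  else (l * f (m / l))%:E.

Definition fdiv {S : finType} (f : R -> R) (pi : S -> R) (M L : S -> S -> R)
  : \bar R := (\sum_x (pi x)%:E * \sum_y fterm f (M x y) (L x y))%E.

Definition f_revKL (t : R) : R := - ln t.
Definition f_alpha (alpha : R) (t : R) : R := (t `^ alpha - 1) / (alpha - 1).
Definition f_KL (t : R) : R := t * ln t.

Context {d : nat} {T : 'I_d -> finType}.
Definition prodX := {dffun forall j : 'I_d, T j}.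

Variable (i : 'I_d) (Ls : forall j : 'I_d, T j -> T j -> R).

Definition Zbold (x y : prodX) : R := \prod_(j : 'I_d | j != i) Ls j (x j) (y j).

Definition tensor_at (L : T i -> T i -> R) (x y : prodX) : R :=
  Zbold x y * L (x i) (y i).

Variable (pi : prodX -> R) (P : prodX -> prodX -> R).

Definition Zsmall (a b : T i) : R :=
  \sum_(x : prodX | x i == a) \sum_(y : prodX | y i == b) pi x * Zbold x y.

Definition objective (f : R -> R) (L : T i -> T i -> R) : \bar R :=
  fdiv f pi P (tensor_at L).

Definition is_minimizer (f : R -> R) (L : T i -> T i -> R) : Prop :=
  is_trans L /\
  forall L' : T i -> T i -> R, is_trans L' -> (objective f L <= objective f L')%E.

Definition unique_minimizer (f : R -> R) (Lstar : T i -> T i -> R) : Prop :=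
  is_minimizer f Lstar /\
  forall L, is_minimizer f L -> forall a b, L a b = Lstar a b.

(* finiteness of the minimal value (well-posedness of the argmin) *)
Definition finite_min (f : R -> R) : Prop :=
  exists L, is_trans L /\ (objective f L < +oo)%E.

Definition normalize (w : T i -> T i -> R) (a b : T i) : R :=
  w a b / \sum_(b' : T i) w a b'.

Definition normalizable (w : T i -> T i -> R) : Prop :=
  forall a, 0 < \sum_(b : T i) w a b.

Definition w_revKL (a b : T i) : R :=
  \prod_(x : prodX | x i == a) \prod_(y : prodX | y i == b)
     P x y `^ (pi x * Zbold x y / Zsmall a b).

Definition w_alpha (alpha : R) (a b : T i) : R :=
  (\sum_(x : prodX | x i == a) \sum_(y : prodX | y i == b)
     pi x * (Zbold x y) `^ (1 - alpha) * P x y `^ alpha) `^ alpha^-1.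

Definition marg (a : T i) : R := \sum_(x : prodX | x i == a) pi x.
Definition P_marg (a b : T i) : R :=
  (\sum_(x : prodX | x i == a) \sum_(y : prodX | y i == b) pi x * P x y) / marg a.

End Defs.

(* Main.v *)
Require Import Defs.
From HB Require Import structures.
From mathcomp Require Import all_boot all_order all_algebra.
From mathcomp Require Import all_classical all_reals all_analysis.
From mathcomp Require Import ring lra.
Import Order.TTheory GRing.Theory Num.Theory.
Import numFieldNormedType.Exports.
Local Open Scope classical_set_scope.
Local Open Scope ring_scope.
Set Implicit Arguments. Unset Strict Implicit. Unset Printing Implicit Defensive.

Section Lims.
Variable R : realType.

Lemma limE_fin (f : R -> R) (l : R) :
  f x @[x --> 0^'+] --> l -> lim ((fun t => (f t)%:E) @ 0^'+) = l%:E.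
Proof.
move=> fl; apply: cvg_lim => //; apply: cvg_EFin => //.
by near=> x.
Unshelve. all: by end_near. Qed.

Lemma limE_y (f : R -> R) :
  f x @[x --> 0^'+] --> +oo -> lim ((fun t => (f t)%:E) @ 0^'+) = +oo%E.
Proof.
by move=> fl; apply: cvg_lim => //; apply/cvgeryP.
Qed.

Lemma Nln_y : (fun t : R => - ln t) x @[x --> 0^'+] --> +oo.
Proof. by apply/cvgNry; exact: lnNy. Qed.

Lemma xlnx0 : (fun t : R => t * ln t) x @[x --> 0^'+] --> 0.
Proof.
have h : (fun t : R => - (2 * t `^ (2^-1))) x @[x --> 0^'+] --> (- (2 * 0) : R).
  apply: cvgN; apply: cvgMr.
  by apply: powR_cvg0.
rewrite mulr0 oppr0 in h.
apply: (squeeze_cvgr _ h (cvg_cst (0:R))).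
near=> t.
have t0 : 0 < t by near: t; exact: nbhs_right_gt.
have t1 : t < 1 by near: t; exact: nbhs_right_lt.
apply/andP; split; last first.
  by rewrite pmulr_rle0 // ln_le0 // ltW.
have := ln_sublinear (powR_gt0 (-(2^-1)) t0).
rewrite ln_powR => H.
have e : t * t `^ (-(2^-1)) = t `^ (2^-1).
  rewrite -{1}(powRr1 (ltW t0)) -powRD; last by rewrite (gt_eqF t0) implybT.
  by congr (_ `^ _); field.
have : - (2^-1) * ln t * t < t `^ (- (2^-1)) * t by rewrite ltr_pM2r.
rewrite [X in _ < X]mulrC e => H2.
have -> : - (2 * t `^ 2^-1) = 2 * (- (t `^ 2^-1)) by ring.
have -> : t * ln t = 2 * - (- 2^-1 * ln t * t) by field.
by rewrite ler_pM2l // lerN2 ltW.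
Unshelve. all: by end_near. Qed.

Lemma at0_revKL : f_at0 (@f_revKL R) = +oo%E.
Proof. by apply: limE_y; exact: Nln_y. Qed.

Lemma inf_revKL : f_inf (@f_revKL R) = 0%E.
Proof.
apply: limE_fin; apply: cvg_trans xlnx0; apply: near_eq_cvg.
near=> t; have t0 : 0 < t by near: t; exact: nbhs_right_gt.
by rewrite /f_revKL lnV ?posrE // opprK.
Unshelve. all: by end_near. Qed.

Lemma at0_KL : f_at0 (@f_KL R) = 0%E.
Proof. by apply: limE_fin; exact: xlnx0. Qed.

Lemma inf_KL : f_inf (@f_KL R) = +oo%E.
Proof.
apply: limE_y; apply: cvg_trans Nln_y; apply: near_eq_cvg.
near=> t; have t0 : 0 < t by near: t; exact: nbhs_right_gt.
by rewrite /f_KL mulrA mulfV ?gt_eqF // mul1r lnV ?posrE.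
Unshelve. all: by end_near. Qed.

Lemma at0_alpha (a : R) : 0 < a ->
  f_at0 (f_alpha a) = (- (a - 1)^-1)%:E.
Proof.
move=> a0; apply: limE_fin; rewrite /f_alpha.
have -> : - (a - 1)^-1 = (0 - 1) / (a - 1) by rewrite sub0r mulN1r.
apply: cvgMl; apply: cvgB; [exact: powR_cvg0 | exact: cvg_cst].
Qed.

Lemma inf_alpha_lt1 (a : R) : 0 < a -> a < 1 -> f_inf (f_alpha a) = 0%E.
Proof.
move=> a0 a1; apply: limE_fin.
have h : (fun t : R => (t `^ (1 - a) - t) / (a - 1)) x @[x --> 0^'+] --> ((0 - 0) / (a - 1) : R).
  apply: cvgMl; apply: cvgB; first by apply: powR_cvg0; rewrite subr_gt0.
  by apply: cvg_at_right_filter; exact: cvg_id.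
rewrite subr0 mul0r in h.
apply: cvg_trans h; apply: near_eq_cvg.
near=> t; have t0 : 0 < t by near: t; exact: nbhs_right_gt.
rewrite /f_alpha mulrA mulrBr mulr1; congr ((_ - _) / _); apply/esym.
rewrite -powR_inv1 ?(ltW t0) // -powRrM -{1}(powRr1 (ltW t0)) -powRD ?(gt_eqF t0) ?implybT //.
congr (_ `^ _); ring.
Unshelve. all: by end_near. Qed.

Lemma inf_alpha_gt1 (a : R) : 1 < a -> f_inf (f_alpha a) = +oo%E.
Proof.
move=> a1; apply: limE_y; apply: ger_cvgy Nln_y.
near=> t; have t0 : 0 < t by near: t; exact: nbhs_right_gt.
have t1 : t < 1 by near: t; exact: nbhs_right_lt.
have e : t * t^-1 `^ a = t `^ (1 - a).
  rewrite -powR_inv1 ?(ltW t0) // -powRrM -{1}(powRr1 (ltW t0)) -powRD ?(gt_eqF t0) ?implybT //.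
  congr (_ `^ _); ring.
rewrite /f_alpha mulrA mulrBr mulr1 e.
have a10 : 0 < a - 1 by rewrite subr_gt0.
rewrite ler_pdivlMr //.
have : 1 + (1 - a) * ln t <= t `^ (1 - a).
  rewrite /powR gt_eqF //; apply: expR_ge1Dx.
nra.
Unshelve. all: by end_near. Qed.

End Lims.
Section Ext.
Variable R : realType.
Definition ext (b : bool) (r : R) : \bar R := if b then +oo%E else r%:E.
Arguments ext : clear implicits.

Lemma ext_add b1 b2 r1 r2 : (ext b1 r1 + ext b2 r2)%E = ext (b1 || b2) (r1 + r2).
Proof. by case: b1; case: b2. Qed.

Lemma sum_ext_seq (I : Type) (s : seq I) (b : I -> bool) (r : I -> R) :
  (\sum_(k <- s) ext (b k) (r k))%E = ext (has b s) (\sum_(k <- s) r k).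
Proof.
elim: s => [|k s IH]; first by rewrite !big_nil.
by rewrite !big_cons IH ext_add.
Qed.

Lemma mul_ext p b r : 0 < p -> (p%:E * ext b r)%E = ext b (p * r).
Proof. by move=> p0; case: b => //=; rewrite gt0_muley ?lte_fin. Qed.

Lemma ext_le b1 b2 r1 r2 : (ext b1 r1 <= ext b2 r2)%E -> ~~ b1 -> (b2 = false -> r1 <= r2).
Proof. by case: b1 => //; move=> + _ b2f; rewrite b2f /= lee_fin. Qed.

Lemma fterm_revKL (m q : R) : 0 <= m -> 0 <= q ->
  fterm f_revKL m q = ext ((q != 0) && (m == 0)) (q * (ln q - ln m)).
Proof.
move=> m0 q0; rewrite /fterm.
have [->|qn0] := eqVneq q 0.
  by case: eqP => _ /=; rewrite ?inf_revKL ?mule0 ?mul0r.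
have qp : 0 < q by rewrite lt_def qn0.
have [->|mn0] := eqVneq m 0.
  by rewrite at0_revKL /= gt0_muley ?lte_fin.
have mp : 0 < m by rewrite lt_def mn0.
rewrite /= /f_revKL ln_div ?posrE //; congr (_%:E); ring.
Qed.

Lemma fterm_KL (m q : R) : 0 <= m -> 0 <= q ->
  fterm f_KL m q = ext ((q == 0) && (m != 0)) (m * (ln m - ln q)).
Proof.
move=> m0 q0; rewrite /fterm.
have [->|qn0] := eqVneq q 0.
  have [->|mn0] := eqVneq m 0; first by rewrite /= mul0r.
  have mp : 0 < m by rewrite lt_def mn0.
  by rewrite inf_KL /= gt0_muley ?lte_fin.
have qp : 0 < q by rewrite lt_def qn0.
have [->|mn0] := eqVneq m 0; first by rewrite at0_KL /= mule0 mul0r.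
have mp : 0 < m by rewrite lt_def mn0.
rewrite /= /f_KL ln_div ?posrE //; congr (_%:E); field.
by rewrite gt_eqF.
Qed.

Lemma fterm_alpha (a m q : R) : 0 < a -> a != 1 -> 0 <= m -> 0 <= q ->
  fterm (f_alpha a) m q =
  ext [&& 1 < a, q == 0 & m != 0] ((m `^ a * q `^ (1 - a) - q) / (a - 1)).
Proof.
move=> a0 a1 m0 q0; rewrite /fterm.
have a1' : 1 - a != 0 by rewrite subr_eq0 eq_sym.
have [->|qn0] := eqVneq q 0.
  rewrite powR0 // mulr0 subr0 mul0r.
  case: (eqVneq m 0) => [me|mn0]; first by rewrite andbF.
  have mp : 0 < m by rewrite lt_def mn0.
  have [alt1|agt1] := ltrP a 1.
    by rewrite inf_alpha_lt1 // mule0 /= (ltNge 1 a) (ltW alt1).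
  have agt1' : 1 < a by rewrite lt_def agt1 andbT.
  by rewrite inf_alpha_gt1 //= agt1' gt0_muley ?lte_fin.
have qp : 0 < q by rewrite lt_def qn0.
rewrite /= andbF.
case: (eqVneq m 0) => [me|mn0].
  rewrite me at0_alpha // powR0 ?gt_eqF // mul0r /=; congr (_%:E); field.
  by rewrite subr_eq0.
have mp : 0 < m by rewrite lt_def mn0.
rewrite /f_alpha; congr (_%:E).
rewrite mulrA mulrBr mulr1; congr ((_ - _) / _).
rewrite powRM ?(ltW mp) ?invr_ge0 ?(ltW qp) // -powR_inv1 ?(ltW qp) // -powRrM.
rewrite mulrCA; congr (_ * _).
rewrite -{1}(powRr1 (ltW qp)) -powRD ?(gt_eqF qp) ?implybT //.
by congr (_ `^ _); ring.
Qed.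

End Ext.
Arguments ext {R}.

Section Ana.
Variable R : realType.

Lemma ln_le_sub1 (u : R) : 0 < u -> ln u <= u - 1.
Proof.
move=> u0; have := expR_ge1Dx (ln u); rewrite lnK ?posrE //; lra.
Qed.

Lemma ln_eq_sub1 (u : R) : 0 < u -> ln u = u - 1 -> u = 1.
Proof.
move=> u0 h; apply/eqP; rewrite -ln_eq0 ?posrE //; apply/negPn/negP => hn.
have := expR_gt1Dx hn; rewrite lnK ?posrE //; lra.
Qed.

Lemma wln (w1 w2 u v : R) : 0 < w1 -> 0 < w2 -> 0 < u -> 0 < v ->
  w1 * ln u + w2 * ln v <= w1 * (u - 1) + w2 * (v - 1) /\
  (w1 * (u - 1) + w2 * (v - 1) <= w1 * ln u + w2 * ln v -> u = 1 /\ v = 1).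
Proof.
move=> w10 w20 u0 v0.
have hu := ln_le_sub1 u0; have hv := ln_le_sub1 v0.
have h1 : w1 * ln u <= w1 * (u - 1) by rewrite ler_pM2l.
have h2 : w2 * ln v <= w2 * (v - 1) by rewrite ler_pM2l.
split; first lra.
move=> h.
have e1 : w1 * ln u = w1 * (u - 1) by lra.
have e2 : w2 * ln v = w2 * (v - 1) by lra.
split; apply: ln_eq_sub1 => //.
  exact: (mulfI (lt0r_neq0 w10) e1).
exact: (mulfI (lt0r_neq0 w20) e2).
Qed.

Lemma lnGM (a q l : R) : 0 < q -> 0 < l ->
  ln (q `^ a * l `^ (1 - a)) = a * ln q + (1 - a) * ln l.
Proof.
by move=> q0 l0; rewrite lnM ?posrE ?powR_gt0 // !ln_powR.
Qed.

Lemma ineqA (a q l : R) : 0 < a -> a < 1 -> 0 <= q -> 0 <= l ->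
  q `^ a * l `^ (1 - a) <= a * q + (1 - a) * l /\
  (a * q + (1 - a) * l <= q `^ a * l `^ (1 - a) -> q = l).
Proof.
move=> a0 a1 q0 l0.
have a1' : 0 < 1 - a by rewrite subr_gt0.
have [qe|qn] := eqVneq q 0.
  rewrite qe powR0 ?gt_eqF // mul0r mulr0 add0r.
  split; first by rewrite mulr_ge0 // ltW.
  move=> h; have : (1 - a) * l <= 0 by [].
  rewrite pmulr_rle0 // => hl; apply/eqP; rewrite eq_le hl l0 //.
have [le|ln0] := eqVneq l 0.
  rewrite le powR0 ?gt_eqF // mulr0 mulr0 addr0.
  split; first by rewrite mulr_ge0 // ltW.
  move=> h; have : a * q <= 0 by [].
  by rewrite pmulr_rle0 // => hq; apply/eqP; rewrite eq_le hq q0.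
have qp : 0 < q by rewrite lt_def qn.
have lp : 0 < l by rewrite lt_def ln0.
set A := a * q + (1 - a) * l.
have Ap : 0 < A by rewrite /A addr_gt0 // mulr_gt0.
have qA : 0 < q / A by rewrite divr_gt0.
have lA : 0 < l / A by rewrite divr_gt0.
have [h1 h2] := wln a0 a1' qA lA.
have s0 : a * (q / A - 1) + (1 - a) * (l / A - 1) = 0.
  rewrite /A; field; by rewrite gt_eqF.
have ln_id : a * ln (q / A) + (1 - a) * ln (l / A) =
    ln (q `^ a * l `^ (1 - a)) - ln A.
  rewrite lnGM // !ln_div ?posrE //; ring.
have G0 : 0 < q `^ a * l `^ (1 - a) by rewrite mulr_gt0 ?powR_gt0.
split.
  rewrite -(ler_ln (x:=_) (y:=A)) ?posrE //.
  move: h1; rewrite s0 ln_id; lra.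
move=> hge.
have hle : q `^ a * l `^ (1 - a) <= A.
  rewrite -(ler_ln (x:=_) (y:=A)) ?posrE //.
  move: h1; rewrite s0 ln_id; lra.
have e : q `^ a * l `^ (1 - a) = A by apply/eqP; rewrite eq_le hle hge.
have [u1 v1] : q / A = 1 /\ l / A = 1.
  by apply: h2; rewrite s0 ln_id e subrr.
have eq : q = A by move: u1; rewrite -[RHS](mulfV (lt0r_neq0 Ap)) => /(mulIf (invr_neq0 (lt0r_neq0 Ap))).
have el : l = A by move: v1; rewrite -[RHS](mulfV (lt0r_neq0 Ap)) => /(mulIf (invr_neq0 (lt0r_neq0 Ap))).
by rewrite eq el.
Qed.


Lemma ineqB (a q l : R) : 1 < a -> 0 <= q -> 0 < l ->
  a * q - (a - 1) * l <= q `^ a * l `^ (1 - a) /\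
  (q `^ a * l `^ (1 - a) <= a * q - (a - 1) * l -> q = l).
Proof.
move=> a1 q0 l0.
have a0 : 0 < a by lra.
have a10 : 0 < a - 1 by rewrite subr_gt0.
have [qe|qn] := eqVneq q 0.
  rewrite qe powR0 ?gt_eqF // mul0r mulr0 sub0r.
  have : 0 < (a - 1) * l by rewrite mulr_gt0.
  split; first lra.
  move=> h; lra.
have qp : 0 < q by rewrite lt_def qn.
set G := q `^ a * l `^ (1 - a).
have G0 : 0 < G by rewrite mulr_gt0 ?powR_gt0.
set H := a * q - (a - 1) * l.
have [Hle|Hgt] := lerP H 0.
  split; first lra.
  move=> h; lra.
have Hq : 0 < H / q by rewrite divr_gt0.
have lq : 0 < l / q by rewrite divr_gt0.
have [h1 h2] := wln ltr01 a10 Hq lq.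
have s0 : 1 * (H / q - 1) + (a - 1) * (l / q - 1) = 0.
  rewrite /H; field; by rewrite gt_eqF.
have ln_id : 1 * ln (H / q) + (a - 1) * ln (l / q) = ln H - ln G.
  rewrite /G lnGM // !ln_div ?posrE //; ring.
have hle : H <= G.
  rewrite -(ler_ln (x:=H) (y:=G)) ?posrE //.
  move: h1; rewrite s0 ln_id; lra.
split => // hge.
have e : G = H by apply/eqP; rewrite eq_le hle hge.
have [u1 v1] : H / q = 1 /\ l / q = 1.
  by apply: h2; rewrite s0 ln_id e subrr.
by move: v1; rewrite -[RHS](mulfV (lt0r_neq0 qp)) => /(mulIf (invr_neq0 (lt0r_neq0 qp))).
Qed.

Lemma gibbs (I : finType) (p q : I -> R) :
  (forall k, 0 <= p k) -> (forall k, 0 <= q k) ->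
  \sum_k p k = 1 -> \sum_k q k = 1 -> (forall k, 0 < p k -> 0 < q k) ->
  0 <= \sum_k p k * (ln (p k) - ln (q k)) /\
  (\sum_k p k * (ln (p k) - ln (q k)) <= 0 -> forall k, p k = q k).
Proof.
move=> p0 q0 sp sq pq.
pose D k := (q k - p k) - p k * (ln (q k) - ln (p k)).
have D0 : forall k, 0 <= D k /\ (D k = 0 -> p k = q k).
  move=> k; rewrite /D.
  have [pe|pn] := eqVneq (p k) 0.
    rewrite pe mul0r subr0 subr0; split => // h; by rewrite h.
  have pk : 0 < p k by rewrite lt_def pn p0.
  have qk := pq k pk.
  have u0 : 0 < q k / p k by rewrite divr_gt0.
  have h1 := ln_le_sub1 u0.
  have e : p k * (ln (q k) - ln (p k)) = p k * ln (q k / p k) by rewrite ln_div ?posrE.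
  have e2 : q k - p k = p k * (q k / p k - 1) by field; rewrite gt_eqF.
  rewrite e e2; split.
    by rewrite -mulrBr mulr_ge0 ?subr_ge0 // ltW.
  move=> h.
  have : ln (q k / p k) = q k / p k - 1.
    apply: (mulfI (lt0r_neq0 pk)); lra.
  move=> /(ln_eq_sub1 u0) /eqP.
  by rewrite -[X in _ == X](mulfV (lt0r_neq0 pk)) => /eqP /(mulIf (invr_neq0 (lt0r_neq0 pk))).
have sD : \sum_k D k = \sum_k p k * (ln (p k) - ln (q k)).
  rewrite /D big_split /= sumrB sq sp subrr add0r sumrN.
  by rewrite -sumrN; apply: eq_bigr => k _; rewrite -mulrN opprB.
rewrite -sD; split; first by apply: sumr_ge0 => k _; case: (D0 k).
move=> hle k.
have : \sum_k D k = 0.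
  apply/eqP; rewrite eq_le hle; apply: sumr_ge0 => k' _; by case: (D0 k').
move=> /eqP; rewrite psumr_eq0; last by move=> k' _; case: (D0 k').
by move=> /allP /(_ k (mem_index_enum _)) /implyP /(_ isT) /eqP; case: (D0 k) => _.
Qed.

End Ana.

Unset Implicit Arguments.

Section Main.
Variables (R : realType) (d : nat) (T : 'I_d -> finType) (i : 'I_d).
Variables (Ls : forall j : 'I_d, T j -> T j -> R).
Variables (pi : prodX (T:=T) -> R) (P : prodX (T:=T) -> prodX (T:=T) -> R).
Hypotheses (pi_pmf : is_pmf pi) (pi_pos : forall x, 0 < pi x) (P_tr : is_trans P)
  (Ls_tr : forall j : 'I_d, j != i -> is_trans (Ls j)).

Local Notation X := (prodX (T:=T)).
Local Notation Z := (Zbold i Ls).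

Lemma Z_ge0 x y : 0 <= Z x y.
Proof. by apply: prodr_ge0 => j ji; case: (Ls_tr _ ji) => h _; exact: h. Qed.

Lemma tensor_ge0 L x y : is_trans L -> 0 <= tensor_at i Ls L x y.
Proof. by case=> h _; rewrite /tensor_at mulr_ge0 ?Z_ge0. Qed.

Definition Bad (bad : R -> R -> bool) (L : T i -> T i -> R) : bool :=
  has (fun x => has (fun y => bad (P x y) (tensor_at i Ls L x y)) (index_enum X))
    (index_enum X).

Definition Obj (r : R -> R -> R) (L : T i -> T i -> R) : R :=
  \sum_x pi x * \sum_y r (P x y) (tensor_at i Ls L x y).

Lemma objective_ext f bad r L :
  (forall m q, 0 <= m -> 0 <= q -> fterm f m q = ext (bad m q) (r m q)) ->
  is_trans L -> objective i Ls pi P f L = ext (Bad bad L) (Obj r L).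
Proof.
move=> hf hL; rewrite /objective /fdiv /Bad /Obj.
rewrite -sum_ext_seq; apply: eq_bigr => x _.
rewrite (eq_bigr (fun y => ext (bad (P x y) (tensor_at i Ls L x y))
                              (r (P x y) (tensor_at i Ls L x y)))); last first.
  by move=> y _; rewrite hf //; [case: P_tr => h _; exact: h | exact: tensor_ge0].
by rewrite sum_ext_seq mul_ext.
Qed.

Lemma Bad_nbad bad L x y : ~~ Bad bad L -> ~~ bad (P x y) (tensor_at i Ls L x y).
Proof.
move=> /hasPn /(_ x (mem_index_enum _)) /hasPn /(_ y (mem_index_enum _)) //.
Qed.

Lemma assemble f bad r Ls_ :
  (forall m q, 0 <= m -> 0 <= q -> fterm f m q = ext (bad m q) (r m q)) ->
  is_trans Ls_ -> ~~ Bad bad Ls_ ->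
  (forall L, is_trans L -> ~~ Bad bad L ->
     Obj r Ls_ <= Obj r L /\ (Obj r L <= Obj r Ls_ -> forall a b, L a b = Ls_ a b)) ->
  unique_minimizer i Ls pi P f Ls_.
Proof.
move=> hf hs nb H; split.
  split => // L' hL'; rewrite (objective_ext _ _ _ _ hf hL') (objective_ext _ _ _ _ hf hs).
  rewrite (negbTE nb) /=; case: (boolP (Bad bad L')) => bL /=; first by rewrite leey.
  by rewrite lee_fin; case: (H L' hL' bL).
move=> L [hL Hmin] a b; have := Hmin Ls_ hs.
rewrite (objective_ext _ _ _ _ hf hL) (objective_ext _ _ _ _ hf hs).
rewrite (negbTE nb) /=; case: (boolP (Bad bad L)) => bL /=; first by rewrite leye_eq.
rewrite lee_fin => hle.
by case: (H L hL bL) => _; apply.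
Qed.


Lemma regroup (F : X -> X -> R) :
  \sum_x \sum_y F x y =
  \sum_(a : T i) \sum_(b : T i) \sum_(x : X | x i == a) \sum_(y : X | y i == b) F x y.
Proof.
pose c : X -> T i := fun x => x i.
rewrite (partition_big c predT) //=.
apply: eq_bigr => a _.
under eq_bigr => x _ do rewrite (partition_big c predT) //=.
by rewrite exchange_big.
Qed.

Definition sw (b : T i) (y : X) : X :=
  [ffun j => @eqtype.dfwith _ T (fun k => y k) i b j].

Lemma sw_i b (y : X) : sw b y i = b.
Proof. by rewrite /sw ffunE dfwith_in. Qed.

Lemma sw_j b (y : X) j : j != i -> sw b y j = y j.
Proof. by move=> ji; rewrite /sw ffunE dfwith_out // eq_sym. Qed.

Lemma sw_sw b b' (y : X) : sw b (sw b' y) = sw b y.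
Proof.
apply/ffunP => j; have [->|ji] := eqVneq j i; first by rewrite !sw_i.
by rewrite !sw_j.
Qed.

Lemma sw_id (y : X) : sw (y i) y = y.
Proof.
apply/ffunP => j; have [->|ji] := eqVneq j i; first by rewrite !sw_i.
by rewrite !sw_j.
Qed.

Lemma Z_swr b (x y : X) : Z x (sw b y) = Z x y.
Proof. by apply: eq_bigr => j ji; rewrite sw_j. Qed.

Lemma Z_swl a (x y : X) : Z (sw a x) y = Z x y.
Proof. by apply: eq_bigr => j ji; rewrite sw_j. Qed.

Lemma block_inv (F : X -> R) (b b' : T i) :
  (forall c y, F (sw c y) = F y) ->
  \sum_(y : X | y i == b) F y = \sum_(y : X | y i == b') F y.
Proof.
move=> hF.
rewrite (reindex_onto (sw b) (sw b')); last first.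
  by move=> y /eqP yb; rewrite sw_sw -yb sw_id.
apply: eq_big => [y|y _]; last exact: hF.
rewrite sw_i eqxx /= sw_sw.
apply/eqP/eqP => [<-|<-]; first by rewrite sw_i.
by rewrite sw_id.
Qed.

Lemma X_inhab : exists x0 : X, true.
Proof.
case: (pickP (fun _ : X => true)) => [x0 _|h]; first exact: (ex_intro (fun _ : X => true) x0 isT).
have hs : \sum_x pi x = 0 by apply: big1 => x _; have := h x.
by case: pi_pmf => _; rewrite hs => /eqP; rewrite eq_sym oner_eq0.
Qed.

Lemma row_pos (S : finType) (L : S -> S -> R) (a : S) : is_trans L ->
  exists b, 0 < L a b.
Proof.
case=> h1 h2; case: (pickP (fun b => 0 < L a b)) => [b hb|hn]; first by exists b.
have hs : \sum_b L a b = 0.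
  by apply: big1 => b _; apply/eqP; rewrite eq_le h1 andbT leNgt hn.
by move: (h2 a); rewrite hs => /eqP; rewrite eq_sym oner_eq0.
Qed.

Lemma sum_pos (S : finType) (Q : pred S) (F : S -> R) (s0 : S) :
  (forall s, Q s -> 0 <= F s) -> Q s0 -> 0 < F s0 -> 0 < \sum_(s | Q s) F s.
Proof.
move=> h q0 f0; rewrite (bigD1 s0) //=.
have : 0 <= \sum_(s | Q s && (s != s0)) F s.
  by apply: sumr_ge0 => s /andP [] /h.
lra.
Qed.

Definition witness (x : X) : X :=
  [ffun j => odflt (x j) [pick z : T j | 0 < Ls j (x j) z]].

Lemma witness_pos x : 0 < Z x (witness x).
Proof.
apply: prodr_gt0 => j ji; rewrite /witness ffunE.
case: pickP => [z hz //|hn].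
have [z hz] := row_pos _ _ (x j) (Ls_tr _ ji).
by move: (hn z); rewrite hz.
Qed.

Lemma exists_x (a : T i) : exists x : X, x i == a.
Proof. by have [x0 _] := X_inhab; exists (sw a x0); rewrite sw_i. Qed.

Lemma Zsmall_pos a b : 0 < Zsmall i Ls pi a b.
Proof.
have [x xa] := exists_x a.
apply: (sum_pos _ _ _ x) => //.
  by move=> x' _; apply: sumr_ge0 => y _; rewrite mulr_ge0 ?Z_ge0 // ltW.
apply: (sum_pos _ _ _ (sw b (witness x))); last by rewrite Z_swr mulr_gt0 ?witness_pos.
  by move=> y _; rewrite mulr_ge0 ?Z_ge0 // ltW.
by rewrite sw_i.
Qed.

Lemma Zsmall_const a b b' : Zsmall i Ls pi a b = Zsmall i Ls pi a b'.
Proof.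
apply: eq_bigr => x _; apply: block_inv => c y; by rewrite Z_swr.
Qed.

Lemma marg_pos a : 0 < marg i pi a.
Proof.
have [x xa] := exists_x a.
by apply: (sum_pos _ _ _ x) => // x' _; apply: ltW.
Qed.

Lemma normalize_trans (w : T i -> T i -> R) :
  (forall a b, 0 <= w a b) -> normalizable i w -> is_trans (normalize i w).
Proof.
move=> w0 hn; split => [a b|a]; first by rewrite /normalize divr_ge0 // ltW.
by rewrite /normalize -mulr_suml mulfV // gt_eqF.
Qed.

Lemma part_y (G : X -> R) : \sum_y G y = \sum_(b : T i) \sum_(y : X | y i == b) G y.
Proof.
pose c : X -> T i := fun x => x i.
by rewrite (partition_big c predT).
Qed.

Lemma sum_le0_each (S : finType) (F : S -> R) :
  (forall s, 0 <= F s) -> \sum_s F s <= 0 -> forall s, F s = 0.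
Proof.
move=> h hs s.
have : \sum_s F s = 0 by apply/eqP; rewrite eq_le hs sumr_ge0.
move=> /eqP; rewrite psumr_eq0 // => /allP /(_ s (mem_index_enum _)) /implyP /(_ isT) /eqP //.
Qed.

Lemma finite_nbad f bad r :
  (forall m q, 0 <= m -> 0 <= q -> fterm f m q = ext (bad m q) (r m q)) ->
  finite_min i Ls pi P f -> exists L0, is_trans L0 /\ ~~ Bad bad L0.
Proof.
move=> hf [L0 [h0 hfin]]; exists L0; split => //.
move: hfin; rewrite (objective_ext _ _ _ _ hf h0).
by case: (Bad bad L0) => //=; rewrite ltxx.
Qed.

Lemma block_const (F : X -> X -> R) (g : T i -> T i -> R) a b :
  \sum_(x : X | x i == a) \sum_(y : X | y i == b) F x y * g (x i) (y i) =
  (\sum_(x : X | x i == a) \sum_(y : X | y i == b) F x y) * g a b.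
Proof.
rewrite big_distrl; apply: eq_bigr => x /eqP xa.
rewrite big_distrl; apply: eq_bigr => y /eqP yb.
by rewrite xa yb.
Qed.

Definition badKL (m q : R) := (q == 0) && (m != 0).
Definition rKL (m q : R) := m * (ln m - ln q).
Definition CKL (a b : T i) : R :=
  \sum_(x : X | x i == a) \sum_(y : X | y i == b) pi x * P x y.
Definition KKL : R := \sum_x pi x * \sum_y P x y * (ln (P x y) - ln (Z x y)).

Lemma fterm_KL' m q : 0 <= m -> 0 <= q -> fterm f_KL m q = ext (badKL m q) (rKL m q).
Proof. exact: fterm_KL. Qed.

Lemma P_ge0 x y : 0 <= P x y. Proof. by case: P_tr. Qed.

Lemma CKL_sum a : \sum_b CKL a b = marg i pi a.
Proof.
rewrite /CKL exchange_big /=; apply: eq_bigr => x _.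
rewrite -part_y -mulr_sumr; case: P_tr => _ ->; by rewrite mulr1.
Qed.

Lemma CKL_ge0 a b : 0 <= CKL a b.
Proof. by apply: sumr_ge0 => x _; apply: sumr_ge0 => y _; rewrite mulr_ge0 ?P_ge0 // ltW. Qed.

Lemma Pmarg_E a b : P_marg i pi P a b = CKL a b / marg i pi a.
Proof. by []. Qed.

Lemma Pmarg_trans : is_trans (P_marg i pi P).
Proof.
split => [a b|a]; first by rewrite Pmarg_E divr_ge0 ?CKL_ge0 // ltW ?marg_pos.
by rewrite /P_marg -/(CKL a _) -mulr_suml CKL_sum mulfV // gt_eqF ?marg_pos.
Qed.

Lemma Obj_KL L : is_trans L -> ~~ Bad badKL L ->
  Obj rKL L = KKL - \sum_a \sum_b CKL a b * ln (L a b).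
Proof.
move=> hL nb; rewrite /Obj /KKL.
have e : forall x y, rKL (P x y) (tensor_at i Ls L x y) =
   P x y * (ln (P x y) - ln (Z x y)) - P x y * ln (L (x i) (y i)).
  move=> x y; rewrite /rKL /tensor_at.
  have [->|pn] := eqVneq (P x y) 0; first by rewrite !mul0r subr0.
  have := Bad_nbad _ _ x y nb; rewrite /badKL /tensor_at pn andbT mulf_eq0 negb_or.
  case/andP => zn ln.
  have zp : 0 < Z x y by rewrite lt_def zn Z_ge0.
  have lp : 0 < L (x i) (y i) by rewrite lt_def ln; case: hL => h _; exact: h.
  rewrite lnM ?posrE //; ring.
under eq_bigr => x _ do under eq_bigr => y _ do rewrite e.
under eq_bigr => x _ do rewrite sumrB mulrBr.
rewrite sumrB; congr (_ - _).
under eq_bigr => x _ do rewrite mulr_sumr.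
rewrite regroup; apply: eq_bigr => a _; apply: eq_bigr => b _.
rewrite /CKL; have /= <- := block_const (fun x y => pi x * P x y) (fun a b => ln (L a b)) a b.
by apply: eq_bigr => x _; apply: eq_bigr => y _; rewrite mulrA.
Qed.

Lemma CKL_Pmarg a b : CKL a b = marg i pi a * P_marg i pi P a b.
Proof. by rewrite Pmarg_E mulrCA mulfV ?mulr1 // gt_eqF ?marg_pos. Qed.

Lemma Obj_diff_gibbs (K : R) (L Ls_ : T i -> T i -> R) (m : T i -> R)
  (C : T i -> T i -> R) :
  (forall a b, C a b = m a * Ls_ a b) ->
  (K - \sum_a \sum_b C a b * ln (L a b)) - (K - \sum_a \sum_b C a b * ln (Ls_ a b)) =
  \sum_a m a * \sum_b Ls_ a b * (ln (Ls_ a b) - ln (L a b)).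
Proof.
move=> hC.
transitivity (\sum_a \sum_b C a b * ln (Ls_ a b) - \sum_a \sum_b C a b * ln (L a b)); first ring.
rewrite -sumrB; apply: eq_bigr => a _; rewrite -sumrB mulr_sumr.
by apply: eq_bigr => b _; rewrite hC; ring.
Qed.

Lemma KL_part : finite_min i Ls pi P f_KL -> unique_minimizer i Ls pi P f_KL (P_marg i pi P).
Proof.
move=> fm; have [L0 [hL0 nb0]] := finite_nbad _ _ _ fterm_KL' fm.
have Zn : forall x y, P x y != 0 -> Z x y != 0.
  move=> x y pn; have := Bad_nbad _ _ x y nb0.
  by rewrite /badKL /tensor_at pn andbT mulf_eq0 negb_or => /andP [].
have L0C : forall L, ~~ Bad badKL L -> forall a b, L a b = 0 -> CKL a b = 0.
  move=> L nb a b hab; apply: big1 => x /eqP xa; apply: big1 => y /eqP yb.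
  have := Bad_nbad _ _ x y nb; rewrite /badKL /tensor_at xa yb hab mulr0 eqxx /=.
  by rewrite negbK => /eqP ->; rewrite mulr0.
have nbq : ~~ Bad badKL (P_marg i pi P).
  apply/hasPn => x _; apply/hasPn => y _; rewrite /badKL /tensor_at.
  have [pe|pn] := eqVneq (P x y) 0; first by rewrite andbF.
  rewrite andbT mulf_neq0 ?Zn // Pmarg_E; apply: lt0r_neq0.
  rewrite divr_gt0 ?marg_pos //.
  apply: (sum_pos _ _ _ x) => //.
    by move=> x' _; apply: sumr_ge0 => y' _; rewrite mulr_ge0 ?P_ge0 // ltW.
  apply: (sum_pos _ _ _ y) => //.
    by move=> y' _; rewrite mulr_ge0 ?P_ge0 // ltW.
  by rewrite mulr_gt0 // lt_def pn P_ge0.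
apply: (assemble _ badKL rKL _ fterm_KL' Pmarg_trans nbq).
move=> L hL nbL.
have hG : forall a, 
  0 <= \sum_b P_marg i pi P a b * (ln (P_marg i pi P a b) - ln (L a b)) /\
  (\sum_b P_marg i pi P a b * (ln (P_marg i pi P a b) - ln (L a b)) <= 0 ->
   forall b, P_marg i pi P a b = L a b).
  move=> a; apply: gibbs.
  - by move=> b; case: Pmarg_trans => h _; exact: h.
  - by move=> b; case: hL => h _; exact: h.
  - by case: Pmarg_trans => _ h; exact: h.
  - by case: hL => _ h; exact: h.
  - move=> b qp; rewrite lt_def; case: hL => h _; rewrite h andbT.
    apply/negP => /eqP hab; move: qp; rewrite Pmarg_E (L0C L nbL a b hab) mul0r ltxx //.
have D := Obj_diff_gibbs KKL L (P_marg i pi P) (marg i pi) CKL CKL_Pmarg.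
rewrite (Obj_KL L hL nbL) (Obj_KL _ Pmarg_trans nbq).
split.
  rewrite -subr_ge0 D; apply: sumr_ge0 => a _.
  by rewrite mulr_ge0 ?(ltW (marg_pos a)) //; case: (hG a).
move=> hle a b.
have : \sum_a marg i pi a * \sum_b P_marg i pi P a b * (ln (P_marg i pi P a b) - ln (L a b)) <= 0.
  by rewrite -D subr_le0.
move=> /sum_le0_each h.
have h2 := h (fun a => mulr_ge0 (ltW (marg_pos a)) (proj1 (hG a))) a.
move: h2 => /eqP; rewrite mulf_eq0 gt_eqF ?marg_pos //= => /eqP h3.
by case: (hG a) => _ H; rewrite H ?h3.
Qed.

Definition badA (al m q : R) := [&& 1 < al, q == 0 & m != 0].
Definition rA (al m q : R) := (m `^ al * q `^ (1 - al) - q) / (al - 1).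
Definition cA (al : R) (a b : T i) : R :=
  \sum_(x : X | x i == a) \sum_(y : X | y i == b)
     pi x * (Z x y) `^ (1 - al) * P x y `^ al.

Lemma cA_ge0 al a b : 0 <= cA al a b.
Proof.
by apply: sumr_ge0 => x _; apply: sumr_ge0 => y _; rewrite !mulr_ge0 ?powR_ge0 // ltW.
Qed.

Lemma Obj_A al L : al != 1 -> is_trans L ->
  Obj (rA al) L = (\sum_a \sum_b cA al a b * L a b `^ (1 - al)
                   - \sum_a Zsmall i Ls pi a a) / (al - 1).
Proof.
move=> a1 hL; rewrite /Obj /rA.
have L0 : forall a b, 0 <= L a b by case: hL.
under eq_bigr => x _ do rewrite -mulr_suml mulrA.
rewrite -mulr_suml; congr (_ * _).
under eq_bigr => x _ do rewrite sumrB mulrBr mulr_sumr mulr_sumr.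
rewrite sumrB; congr (_ - _).
  rewrite regroup; apply: eq_bigr => a _; apply: eq_bigr => b _.
  rewrite /cA; have /= <- := block_const (fun x y => pi x * (Z x y) `^ (1 - al) * P x y `^ al)
     (fun a b => L a b `^ (1 - al)) a b.
  apply: eq_bigr => x _; apply: eq_bigr => y _.
  rewrite /tensor_at powRM ?Z_ge0 ?L0 //; ring.
rewrite regroup; apply: eq_bigr => a _.
rewrite (eq_bigr (fun b => Zsmall i Ls pi a a * L a b)); last first.
  move=> b _; rewrite (Zsmall_const a a b) /Zsmall.
  have /= <- := block_const (fun x y => pi x * Z x y) L a b.
  by apply: eq_bigr => x _; apply: eq_bigr => y _; rewrite /tensor_at mulrA.
by rewrite -mulr_sumr; case: hL => _ ->; rewrite mulr1.
Qed.

Lemma walpha_pow al a b : 0 < al -> w_alpha i Ls pi P al a b `^ al = cA al a b.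
Proof.
move=> a0; rewrite /w_alpha -/(cA al a b) -powRrM mulVf ?gt_eqF //.
by rewrite powRr1 ?cA_ge0.
Qed.

Lemma SA_q al a : 0 < al -> normalizable i (w_alpha i Ls pi P al) ->
  \sum_b cA al a b * normalize i (w_alpha i Ls pi P al) a b `^ (1 - al) =
  (\sum_b w_alpha i Ls pi P al a b) `^ al.
Proof.
move=> a0 hn; set w := w_alpha i Ls pi P al; set W := \sum_b w a b.
have W0 : 0 < W by exact: hn.
have ntr := normalize_trans w (fun a b => powR_ge0 _ _) hn.
rewrite -[RHS]mulr1; case: ntr => hq0 hs; rewrite -[in RHS](hs a) mulr_sumr.
apply: eq_bigr => b _.
have wq : w a b = W * normalize i w a b by rewrite /normalize mulrCA mulfV ?mulr1 // gt_eqF.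
rewrite -walpha_pow // -/w wq powRM ?(ltW W0) ?hq0 // -mulrA; congr (_ * _).
rewrite -powRD; last by rewrite addrC subrK oner_eq0.
by rewrite addrC subrK powRr1 ?hq0.
Qed.

Definition WA al a := \sum_b w_alpha i Ls pi P al a b.
Definition EA al (L : T i -> T i -> R) a b :=
  cA al a b * L a b `^ (1 - al) -
  WA al a `^ al * (al * normalize i (w_alpha i Ls pi P al) a b + (1 - al) * L a b).

Section AlphaFix.
Variable al : R.
Hypotheses (al0 : 0 < al) (al1 : al != 1).
Hypothesis hn : normalizable i (w_alpha i Ls pi P al).
Local Notation w := (w_alpha i Ls pi P al).
Local Notation q := (normalize i w).
Local Notation W := (WA al).
Local Notation E := (EA al).

Lemma q_trans : is_trans q.
Proof. exact: normalize_trans (fun a b => powR_ge0 _ _) hn. Qed.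

Lemma cA_Wq a b : cA al a b = W a `^ al * q a b `^ al.
Proof.
have W0 : 0 < W a by exact: hn.
have wq : w a b = W a * q a b by rewrite /q /normalize mulrCA mulfV ?mulr1 // gt_eqF.
rewrite -walpha_pow // wq powRM // ?(ltW W0) //; by case: q_trans.
Qed.

Lemma E_term L a b : is_trans L -> (1 < al -> L a b = 0 -> cA al a b = 0) ->
  0 <= E L a b / (al - 1) /\ (E L a b / (al - 1) <= 0 -> L a b = q a b).
Proof.
move=> hL hc.
have W0 : 0 < W a by exact: hn.
have WA : 0 < W a `^ al by rewrite powR_gt0.
have q0 : 0 <= q a b by case: q_trans.
have l0 : 0 <= L a b by case: hL.
have eE : E L a b = W a `^ al * (q a b `^ al * L a b `^ (1 - al) - (al * q a b + (1 - al) * L a b)).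
  by rewrite /EA cA_Wq; ring.
have [alt1|agt1] := ltrP al 1.
  have n1 : al - 1 < 0 by rewrite subr_lt0.
  have [h1 h2] := ineqA al0 alt1 q0 l0.
  rewrite eE; split.
    by rewrite ler_ndivlMr // mul0r pmulr_rle0 // subr_le0.
  rewrite ler_ndivrMr // mul0r pmulr_rge0 // subr_ge0 => h.
  by rewrite (h2 h).
have agt1' : 1 < al by rewrite lt_def agt1 andbT.
have p1 : 0 < al - 1 by rewrite subr_gt0.
have [le|lnz] := eqVneq (L a b) 0.
  have c0 := hc agt1' le.
  have qz : q a b = 0.
    move: c0; rewrite cA_Wq => /eqP; rewrite mulf_eq0 (gt_eqF WA) /= => /eqP /powR_eq0_eq0 //.
  by rewrite /EA le c0 qz !(mul0r, mulr0, addr0, subr0); split.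
have lp : 0 < L a b by rewrite lt_def lnz l0.
have [h1 h2] := ineqB agt1' q0 lp.
have e2 : al * q a b + (1 - al) * L a b = al * q a b - (al - 1) * L a b by ring.
rewrite eE e2; split.
  by rewrite divr_ge0 ?(ltW p1) // mulr_ge0 ?(ltW WA) // subr_ge0.
rewrite ler_pdivrMr // mul0r pmulr_rle0 // subr_le0 => h.
by rewrite (h2 h).
Qed.

Lemma sumE L a : is_trans L ->
  \sum_b E L a b = \sum_b cA al a b * L a b `^ (1 - al) - W a `^ al.
Proof.
move=> hL; rewrite /EA sumrB -mulr_sumr big_split /= -!mulr_sumr.
case: hL => _ ->; case: q_trans => _ ->; congr (_ - _); by rewrite !mulr1 addrC subrK mulr1.
Qed.

End AlphaFix.

Lemma alpha_part al : 0 < al -> al != 1 ->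
  finite_min i Ls pi P (f_alpha al) ->
  normalizable i (w_alpha i Ls pi P al) ->
  unique_minimizer i Ls pi P (f_alpha al) (normalize i (w_alpha i Ls pi P al)).
Proof.
move=> al0 al1 fm hn.
have hf : forall m q, 0 <= m -> 0 <= q -> fterm (f_alpha al) m q = ext (badA al m q) (rA al m q).
  by move=> m q hm hq; rewrite fterm_alpha.
have [L0 [hL0 nb0]] := finite_nbad _ _ _ hf fm.
set w := w_alpha i Ls pi P al; set q := normalize i w.
have qtr : is_trans q := q_trans al hn.
have nbq : ~~ Bad (badA al) q.
  apply/hasPn => x _; apply/hasPn => y _; rewrite /badA /tensor_at.
  case: (ltrP 1 al) => //= agt1.
  have [pe|pn] := eqVneq (P x y) 0; first by rewrite andbF.
  have zn : Z x y != 0.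
    have := Bad_nbad _ _ x y nb0; rewrite /badA /tensor_at agt1 pn andbT /= mulf_eq0 negb_or.
    by case/andP.
  rewrite andbT mulf_neq0 //; apply: lt0r_neq0.
  rewrite /q /normalize divr_gt0 //.
  rewrite /w /w_alpha powR_gt0 //.
  apply: (sum_pos _ _ _ x) => //.
    by move=> x' _; apply: sumr_ge0 => y' _; rewrite !mulr_ge0 ?powR_ge0 // ltW.
  apply: (sum_pos _ _ _ y) => //.
    by move=> y' _; rewrite !mulr_ge0 ?powR_ge0 // ltW.
  have zp : 0 < Z x y by rewrite lt_def zn Z_ge0.
  have pp : 0 < P x y by rewrite lt_def pn P_ge0.
  by rewrite !mulr_gt0 ?powR_gt0.
apply: (assemble _ (badA al) (rA al) _ hf qtr nbq).
move=> L hL nbL.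
have hc : forall a b, 1 < al -> L a b = 0 -> cA al a b = 0.
  move=> a b agt1 hab; apply: big1 => x /eqP xa; apply: big1 => y /eqP yb.
  have := Bad_nbad _ _ x y nbL; rewrite /badA /tensor_at xa yb hab mulr0 eqxx agt1 /=.
  by move=> /negPn /eqP ->; rewrite powR0 ?mulr0 // lt0r_neq0.
have hE := fun a b => E_term al al0 al1 hn L a b hL (hc a b).
have D : Obj (rA al) L - Obj (rA al) q = \sum_a \sum_b EA al L a b / (al - 1).
  rewrite !Obj_A //.
  have e1 : \sum_a \sum_b EA al L a b = \sum_a \sum_b cA al a b * L a b `^ (1 - al)
     - \sum_a \sum_b cA al a b * q a b `^ (1 - al).
    rewrite -sumrB; apply: eq_bigr => a _; rewrite sumE // /q /w SA_q //.
  transitivity ((\sum_a \sum_b EA al L a b) / (al - 1)); first by rewrite e1; ring.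
  rewrite mulr_suml; apply: eq_bigr => a _; by rewrite mulr_suml.
split.
  rewrite -subr_ge0 D; apply: sumr_ge0 => a _; apply: sumr_ge0 => b _.
  by case: (hE a b).
move=> hle a b.
have : \sum_a \sum_b EA al L a b / (al - 1) <= 0 by rewrite -D subr_le0.
move=> /sum_le0_each h.
have h2 := h (fun a => sumr_ge0 _ (fun b _ => proj1 (hE a b))) a.
move: h2 => /eqP; rewrite psumr_eq0; last by move=> b' _; case: (hE a b').
move=> /allP /(_ b (mem_index_enum _)) /implyP /(_ isT) /eqP h3.
by case: (hE a b) => _ H; rewrite H ?h3.
Qed.

Definition badR (m q : R) := (q != 0) && (m == 0).
Definition rR (m q : R) := q * (ln q - ln m).
Definition Kz (a b : T i) : R :=
  \sum_(x : X | x i == a) \sum_(y : X | y i == b) pi x * Z x y * ln (Z x y).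
Definition Km (a b : T i) : R :=
  \sum_(x : X | x i == a) \sum_(y : X | y i == b) pi x * Z x y * ln (P x y).

Lemma fterm_R m q : 0 <= m -> 0 <= q -> fterm f_revKL m q = ext (badR m q) (rR m q).
Proof. exact: fterm_revKL. Qed.

Lemma rR_split m z l : 0 <= z -> 0 <= l ->
  rR m (z * l) = z * ln z * l + z * (l * ln l) - z * ln m * l.
Proof.
move=> z0 l0; rewrite /rR.
have [->|zn] := eqVneq z 0; first by rewrite !mul0r !(subr0, addr0).
have [->|lnz] := eqVneq l 0; first by rewrite !(mulr0, mul0r, subr0, addr0).
have zp : 0 < z by rewrite lt_def zn z0.
have lp : 0 < l by rewrite lt_def lnz l0.
rewrite lnM ?posrE //; ring.
Qed.

Lemma Obj_R_raw L : is_trans L ->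
  Obj rR L = \sum_a \sum_b (Kz a b * L a b + Zsmall i Ls pi a b * (L a b * ln (L a b))
                             - Km a b * L a b).
Proof.
move=> hL; have L0 : forall a b, 0 <= L a b by case: hL.
rewrite /Obj.
under eq_bigr => x _ do under eq_bigr => y _ do rewrite /tensor_at rR_split ?Z_ge0 ?L0 //.
under eq_bigr => x _ do rewrite mulr_sumr.
rewrite regroup; apply: eq_bigr => a _; apply: eq_bigr => b _.
rewrite /Kz /Zsmall /Km.
have /= <- := block_const (fun x y => pi x * Z x y * ln (Z x y)) L a b.
have /= <- := block_const (fun x y => pi x * Z x y) (fun a b => L a b * ln (L a b)) a b.
have /= <- := block_const (fun x y => pi x * Z x y * ln (P x y)) L a b.
rewrite -big_split /= -sumrB; apply: eq_bigr => x _.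
rewrite -big_split /= -sumrB; apply: eq_bigr => y _.
ring.
Qed.

Lemma ln_prod (S : finType) (Q : pred S) (F : S -> R) :
  (forall s, Q s -> 0 < F s) ->
  0 < \prod_(s | Q s) F s /\ ln (\prod_(s | Q s) F s) = \sum_(s | Q s) ln (F s).
Proof.
move=> hF; apply: (big_rec2 (fun p t => 0 < p /\ ln p = t)); first by rewrite ln1.
move=> s p t Qs [p0 <-]; split; first by rewrite mulr_gt0 ?hF.
by rewrite lnM ?posrE ?hF.
Qed.

Local Notation wR := (w_revKL i Ls pi P).
Local Notation sa a := (Zsmall i Ls pi a a).

Lemma wR_ge0 a b : 0 <= wR a b.
Proof. by apply: prodr_ge0 => x _; apply: prodr_ge0 => y _; exact: powR_ge0. Qed.

Lemma wR_pos_ln (a b : T i) :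
  (forall x y : X, x i == a -> y i == b -> Z x y != 0 -> P x y != 0) ->
  0 < wR a b /\ ln (wR a b) = Km a b / sa a.
Proof.
move=> h.
have fpos : forall x : X, x i == a -> forall y : X, y i == b ->
    0 < P x y `^ (pi x * Z x y / Zsmall i Ls pi a b).
  move=> x xa y yb; have [ze|zn] := eqVneq (Z x y) 0.
    by rewrite ze mulr0 mul0r powRr0.
  by rewrite powR_gt0 // lt_def h // P_ge0.
have inner : forall x : X, x i == a ->
   0 < \prod_(y : X | y i == b) P x y `^ (pi x * Z x y / Zsmall i Ls pi a b) /\
   ln (\prod_(y : X | y i == b) P x y `^ (pi x * Z x y / Zsmall i Ls pi a b)) =
   \sum_(y : X | y i == b) ln (P x y `^ (pi x * Z x y / Zsmall i Ls pi a b)).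
  by move=> x xa; apply: ln_prod => y yb; exact: fpos.
have [w0 ew] := ln_prod _ (fun x : X => x i == a)
  (fun x => \prod_(y : X | y i == b) P x y `^ (pi x * Z x y / Zsmall i Ls pi a b))
  (fun x xa => proj1 (inner x xa)).
split; first exact: w0.
rewrite /w_revKL ew /Km mulr_suml; apply: eq_bigr => x xa.
rewrite (proj2 (inner x xa)) mulr_suml; apply: eq_bigr => y yb.
rewrite ln_powR (Zsmall_const a b a); ring.
Qed.

Lemma wR_zero (a b : T i) (x y : X) : x i == a -> y i == b -> Z x y != 0 -> P x y = 0 ->
  wR a b = 0.
Proof.
move=> xa yb zn pe.
rewrite /w_revKL (bigD1 x) //= (bigD1 y) //= pe powR0 ?mul0r //.
by rewrite !mulf_neq0 // ?invr_neq0 // lt0r_neq0 // Zsmall_pos.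
Qed.

Lemma Kz_const (a b : T i) : Kz a b = Kz a a.
Proof. by apply: eq_bigr => x _; apply: block_inv => c y; rewrite Z_swr. Qed.

Definition GR (L : T i -> T i -> R) (a : T i) : R :=
  \sum_b L a b * (ln (L a b) - ln (normalize i wR a b)).

Lemma Obj_R L : is_trans L -> normalizable i wR ->
  (forall a b (x y : X), x i == a -> y i == b -> 0 < L a b -> Z x y != 0 -> P x y != 0) ->
  Obj rR L = \sum_a (Kz a a + sa a * (GR L a - ln (\sum_b wR a b))).
Proof.
move=> hL hn h; have L0 : forall a b, 0 <= L a b by case: hL.
rewrite Obj_R_raw //; apply: eq_bigr => a _.
have W0 : 0 < \sum_b wR a b := hn a.
rewrite (eq_bigr (fun b => Kz a a * L a b + sa a * (L a b * (ln (L a b) - ln (normalize i wR a b)))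
     - sa a * ln (\sum_b wR a b) * L a b)); last first.
  move=> b _; rewrite Kz_const (Zsmall_const a b a).
  have [le|lnz] := eqVneq (L a b) 0; first by rewrite le !(mulr0, mul0r, subr0, addr0).
  have lp : 0 < L a b by rewrite lt_def lnz L0.
  have [wp wl] := wR_pos_ln a b (fun x y xa yb zn => h a b x y xa yb lp zn).
  have -> : Km a b = sa a * ln (wR a b) by rewrite wl mulrCA mulfV ?mulr1 // gt_eqF ?Zsmall_pos.
  rewrite /normalize ln_div ?posrE //; ring.
rewrite sumrB big_split /= -!mulr_sumr.
case: hL => _ ->; rewrite /GR; ring.
Qed.

Lemma revKL_part : normalizable i wR -> unique_minimizer i Ls pi P f_revKL (normalize i wR).
Proof.
move=> hn.
have qtr : is_trans (normalize i wR) := normalize_trans _ wR_ge0 hn.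
have q0 : forall a b, 0 <= normalize i wR a b by case: qtr.
have nbq : ~~ Bad badR (normalize i wR).
  apply/hasPn => x _; apply/hasPn => y _; rewrite /badR /tensor_at.
  apply/negP => /andP [] hz /eqP pe.
  move: hz; rewrite mulf_eq0 negb_or => /andP [zn qn].
  move: qn; rewrite /normalize mulf_eq0 negb_or => /andP [] /eqP [].
  by apply: (wR_zero _ _ x y) => //.
apply: (assemble _ badR rR _ fterm_R qtr nbq).
move=> L hL nbL.
have hyp : forall (L' : T i -> T i -> R), ~~ Bad badR L' ->
    forall a b (x y : X), x i == a -> y i == b -> 0 < L' a b -> Z x y != 0 -> P x y != 0.
  move=> L' nb a b x y /eqP xa /eqP yb lp zn.
  have := Bad_nbad _ _ x y nb; rewrite /badR /tensor_at xa yb.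
  by rewrite mulf_neq0 // lt0r_neq0.
rewrite (Obj_R L hL hn (hyp L nbL)) (Obj_R _ qtr hn (hyp _ nbq)).
have Gq : forall a, GR (normalize i wR) a = 0.
  by move=> a; apply: big1 => b _; rewrite subrr mulr0.
have hG : forall a, 0 <= GR L a /\ (GR L a <= 0 -> forall b, L a b = normalize i wR a b).
  move=> a; apply: gibbs.
  - by case: hL.
  - by move=> b; exact: q0.
  - by case: hL => _; exact.
  - by case: qtr => _; exact.
  - move=> b lp; rewrite /normalize divr_gt0 //.
    apply: (proj1 (wR_pos_ln a b _)) => x y xa yb zn.
    exact: (hyp L nbL a b x y xa yb lp zn).
have D : \sum_a (Kz a a + sa a * (GR L a - ln (\sum_b wR a b))) -
         \sum_a (Kz a a + sa a * (GR (normalize i wR) a - ln (\sum_b wR a b))) =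
         \sum_a sa a * GR L a.
  rewrite -sumrB; apply: eq_bigr => a _; rewrite Gq; ring.
split.
  rewrite -subr_ge0 D; apply: sumr_ge0 => a _.
  by rewrite mulr_ge0 ?(ltW (Zsmall_pos a a)) //; case: (hG a).
move=> hle a b.
have : \sum_a sa a * GR L a <= 0 by rewrite -D subr_le0.
move=> /sum_le0_each h.
have h2 := h (fun a => mulr_ge0 (ltW (Zsmall_pos a a)) (proj1 (hG a))) a.
move: h2 => /eqP; rewrite mulf_eq0 gt_eqF ?Zsmall_pos //= => /eqP h3.
by case: (hG a) => _ H; rewrite H ?h3.
Qed.
End Main.

Close Scope classical_set_scope.
Unset Implicit Arguments.

Theorem theorem2p11 (R : realType) (d : nat) (T : 'I_d -> finType)
  (pi : prodX (T:=T) -> R) (P : prodX (T:=T) -> prodX (T:=T) -> R) (i : 'I_d)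
  (Ls : forall j : 'I_d, T j -> T j -> R) :
  is_pmf pi -> (forall x, 0 < pi x) -> is_trans P ->
  (forall j : 'I_d, j != i -> is_trans (Ls j)) ->
  [/\
   (* 1. reverse KL *)
   (normalizable i (w_revKL i Ls pi P) ->
    unique_minimizer i Ls pi P f_revKL (normalize i (w_revKL i Ls pi P))),
   (* 2. alpha-divergence *)
   (forall alpha : R, 0 < alpha -> alpha != 1 ->
    finite_min i Ls pi P (f_alpha alpha) ->
    normalizable i (w_alpha i Ls pi P alpha) ->
    unique_minimizer i Ls pi P (f_alpha alpha) (normalize i (w_alpha i Ls pi P alpha)))
  & (* 3. KL *)
   (finite_min i Ls pi P f_KL ->
    unique_minimizer i Ls pi P f_KL (P_marg i pi P))].
Proof.
move=> h1 h2 h3 h4; split.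
- by move=> hn; apply: revKL_part.
- by move=> al al0 al1 fm hn; apply: alpha_part.
- by move=> fm; apply: KL_part.
Qed.
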